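(* Let $\varpi$ be an oscillation function on $[0,R)$ that is concave and differentiable in a neighborhood of the origin, and assume: (a) $\int_0^R \varpi(r)\,\frac{dr}{r}<\infty$; (b) $\lim_{r\to0}\varpi(r)/r=+\infty$; (c) $\lim_{r\to0}\frac{\varpi(r)}{r\,\varpi'(r)}=C_1$ for some $C_1\in(1,+\infty]$. For $0<r<R$ set $$B(r)=\frac{r\int_r^{R}\frac{\varpi(s)}{s^2}\,ds}{\int_0^r\frac{\varpi(s)}{s}\,ds}.$$ Then $\lim_{r\to0}B(r)=\frac{1}{C_1-1}$ (interpreted as $0$ if $C_1=+\infty$). In particular there is a constant $C_2>0$ such that $B(r)\le C_2$ for all $r$ in some neighborhood of the origin.
   Context: An oscillation function is a real, continuous, non-decreasing function $\varpi$ defined on $[0,R)$ for some $R>0$, with $\varpi(0)=0$ and $\varpi(r)>0$ for $r>0$. ''Differentiable'' means pointwise differentiable at each $r>0$ in a neighborhood of the origin. *)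

(* Defs.v *)
From HB Require Import structures.
From mathcomp Require Import all_boot all_order all_algebra.
From mathcomp Require Import all_classical all_reals all_analysis.
Set Implicit Arguments. Unset Strict Implicit. Unset Printing Implicit Defensive.
Import Order.TTheory GRing.Theory Num.Theory.
Import numFieldNormedType.Exports.
Local Open Scope classical_set_scope.
Local Open Scope ring_scope.

Definition oscillation_fun {R : realType} (R0 : R) (w : R -> R) : Prop :=
  0 < R0 /\
  {within `[0, R0[, continuous w} /\
  {in `[0, R0[ &, forall x y, x <= y -> w x <= w y} /\
  w 0 = 0 /\
  (forall r, 0 < r < R0 -> 0 < w r).

Definition concave_on {R : realType} (A : set R) (w : R -> R) : Prop :=
  forall x y t, A x -> A y -> 0 <= t <= 1 ->
    (1 - t) * w x + t * w y <= w ((1 - t) * x + t * y).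

Definition oscB {R : realType} (R0 : R) (w : R -> R) (r : R) : R :=
  r * fine (\int[lebesgue_measure]_(s in `]r, R0[) (w s / s ^+ 2)%:E)
    / fine (\int[lebesgue_measure]_(s in `]0, r[) (w s / s)%:E).

Definition oscB_limit {R : realType} (C1 : \bar R) : R :=
  match C1 with
  | EFin c => 1 / (c - 1)
  | _ => 0
  end.

(* Main.v *)
Require Import Defs.
From HB Require Import structures.
From mathcomp Require Import all_boot all_order all_algebra.
From mathcomp Require Import all_classical all_reals all_analysis.
From mathcomp Require Import ring lra measurable_realfun.
Import Order.TTheory GRing.Theory Num.Theory.
Import numFieldNormedType.Exports.
Local Open Scope classical_set_scope.
Local Open Scope ring_scope.
Local Notation mu := (@lebesgue_measure _).
Lemma near_right_itv (R : realType) (P : R -> Prop) (a : R) :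
  (\forall x \near a^'+, P x) -> exists2 c, a < c & forall x, a < x < c -> P x.
Proof.
move=> [D /= D0 H]; exists (a + D); first by rewrite ltrDl.
move=> x /andP[ax xc]; apply: H => //=.
by rewrite /ball_ /= distrC gtr0_norm ?subr_gt0 // ltrBlDl.
Qed.

Lemma lhopital_infty (R : realType) (f df g dg : R -> R) (a b l : R) :
  a < b ->
  (forall x, x \in `]a, b[ -> is_derive x 1 f (df x)) ->
  (forall x, x \in `]a, b[ -> is_derive x 1 g (dg x)) ->
  (forall x, x \in `]a, b[ -> dg x != 0) ->
  g x @[x --> a^'+] --> +oo ->
  df x / dg x @[x --> a^'+] --> l -> f x / g x @[x --> a^'+] --> l.
Proof.
move=> ab fdf gdg dg0 goo fgl.
apply/cvgrPdist_le => e e0.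
have e30 : 0 < e / 3 by rewrite divr_gt0.
have := fgl; move=> /cvgrPdist_lt /(_ _ e30) /near_right_itv [c ac Hc].
pose y := a + (Num.min c b - a) / 2.
have mab : a < Num.min c b by rewrite lt_min ac ab.
have ay : a < y by rewrite ltrDl divr_gt0 // subr_gt0.
have yc : y < Num.min c b.
  by rewrite /y -ltrBrDl ltr_pdivrMr // mulr2n ?mulrDr ?mulr1; lra.
have yb : y < b by move: yc; rewrite lt_min => /andP[].
have yc' : y < c by move: yc; rewrite lt_min => /andP[].
pose M := `|g y| + `|f y - l * g y| / (e / 3) + 1.
move/cvgryPgt: goo => /(_ M) goo.
near=> x.
have ax : a < x by near: x; exact: nbhs_right_gt.
have xy : x < y by near: x; exact: nbhs_right_lt.
have Mg : M < g x by near: x; exact: goo.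
have sub z : z \in `[x, y] -> z \in `]a, b[.
  by rewrite !in_itv /= => /andP[? ?]; apply/andP; split; lra.
have cf : {within `[x, y], continuous f}.
  apply: derivable_within_continuous => z zxy.
  by apply: ex_derive; apply: fdf; apply: sub.
have cg : {within `[x, y], continuous g}.
  apply: derivable_within_continuous => z zxy.
  by apply: ex_derive; apply: gdg; apply: sub.
have sub2 z : z \in `]x, y[ -> z \in `]a, b[.
  by rewrite !in_itv /= => /andP[? ?]; apply/andP; split; lra.
have [t txy tE] := cauchy_MVT xy cf cg (fun z h => fdf z (sub2 z h))
  (fun z h => gdg z (sub2 z h)) (fun z h => dg0 z (sub2 z h)).
have gyx : g y - g x != 0 := differentiable_subr_neq0 xy cg
  (fun z h => gdg z (sub2 z h)) (fun z h => dg0 z (sub2 z h)).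
have Ht : `|l - (f y - f x) / (g y - g x)| < e / 3.
  rewrite -tE; apply: Hc; move: txy; rewrite in_itv /= => /andP[xt ty].
  by rewrite (lt_trans ax xt) (lt_trans ty yc').
set q := (f y - f x) / (g y - g x) in Ht.
have gx0 : 0 < g x.
  apply: le_lt_trans Mg; rewrite /M; have := normr_ge0 (g y).
  have : 0 <= `|f y - l * g y| / (e / 3) by rewrite divr_ge0 // ltW.
  lra.
have fxE : f x = f y - q * (g y - g x) by rewrite /q divfK //; ring.
have key : l - f x / g x = - ((f y - l * g y) / g x) - (l - q) * ((g y - g x) / g x).
  rewrite fxE; field; exact: lt0r_neq0.
rewrite key.
apply: (le_trans (ler_normB _ _)).
have h1 : `|(f y - l * g y) / g x| <= e / 3.
  rewrite normrM normfV (gtr0_norm gx0) ler_pdivrMr //.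
  have hK : `|f y - l * g y| = e / 3 * (`|f y - l * g y| / (e / 3)).
    by rewrite mulrCA mulfV ?mulr1 // gt_eqF.
  rewrite hK; move: Mg; rewrite /M; have := normr_ge0 (g y).
  have : 0 <= `|f y - l * g y| / (e / 3) by rewrite divr_ge0 // ltW.
  set K := `|f y - l * g y| / (e / 3); set E := e / 3 in e30 *.
  nra.
have h2 : `|(g y - g x) / g x| <= 2.
  rewrite normrM normfV (gtr0_norm gx0) ler_pdivrMr //.
  apply: (le_trans (ler_normB _ _)); rewrite (gtr0_norm gx0).
  have : `|g y| < g x.
    apply: le_lt_trans Mg; rewrite /M.
    have : 0 <= `|f y - l * g y| / (e / 3) by rewrite divr_ge0 // ltW.
    lra.
  lra.
rewrite normrN [`|(l - q) * _|]normrM.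
have h5 : `|l - q| * `|(g y - g x) / g x| <= e / 3 * 2.
  by apply: ler_pM => //; exact: ltW.
apply: le_trans (lerD h1 h5) _.
have -> : e / 3 + e / 3 * 2 = e by field.
by [].
Unshelve. all: by end_near. Qed.
Lemma meas_w (R : realType) (R0 : R) (w : R -> R) :
  {within `[0, R0[, continuous w} -> measurable_fun `[0, R0[ w.
Proof. by move=> cw; apply: subspace_continuous_measurable_fun. Qed.

Lemma meas_inv (R : realType) : measurable_fun (`]0, +oo[ : set R) (fun s : R => s^-1).
Proof.
apply: open_continuous_measurable_fun; first exact: interval_open.
move=> x; rewrite inE /= in_itv /= andbT => x0.
by apply: inv_continuous; rewrite gt_eqF.
Qed.

Lemma meas_u (R : realType) (R0 : R) (w : R -> R) :
  {within `[0, R0[, continuous w} -> measurable_fun `]0, R0[ (fun s => w s / s).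
Proof.
move=> cw; apply: measurable_funM.
  have sub : `]0, R0[ `<=` `[0, R0[ by apply: subset_itvr; rewrite bnd_simp.
  exact: (measurable_funS _ sub (@meas_w _ _ _ cw)).
have sub : `]0, R0[ `<=` `]0, +oo[ by apply: subset_itvl; rewrite bnd_simp.
exact: (measurable_funS _ sub (@meas_inv R)).
Qed.

Lemma meas_v (R : realType) (R0 : R) (w : R -> R) :
  {within `[0, R0[, continuous w} -> measurable_fun `]0, R0[ (fun s => w s / s ^+ 2).
Proof.
move=> cw.
have -> : (fun s => w s / s ^+ 2) = (fun s => w s / s * s^-1).
  by apply/funext => s; rewrite expr2 invfM mulrA.
apply: measurable_funM; first exact: (@meas_u _ _ _ cw).
have sub : `]0, R0[ `<=` `]0, +oo[ by apply: subset_itvl; rewrite bnd_simp.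
exact: (measurable_funS _ sub (@meas_inv R)).
Qed.

Lemma u_integrable (R : realType) (R0 : R) (w : R -> R) :
  oscillation_fun R0 w ->
  (\int[mu]_(r in `]0%R, R0[) (w r / r)%:E < +oo)%E ->
  mu.-integrable `]0, R0[ (EFin \o (fun s => w s / s)).
Proof.
move=> [R00 [cw [mw [w0 wp]]]] fin.
apply/integrableP; split; first (apply/measurable_EFinP; exact: (@meas_u _ _ _ cw)).
rewrite (_ : (\int[mu]_(x in `]0%R, R0[) `|(EFin \o (fun s : R => (w s / s)%R)) x|)%E
   = (\int[mu]_(x in `]0%R, R0[) (w x / x)%:E)%E) //.
apply: eq_integral => x; rewrite inE /= in_itv /= => /andP[x0 xR].
by rewrite /= ger0_norm // divr_ge0 // ltW // wp // x0 xR.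
Qed.


Lemma v_integrable (R : realType) (R0 : R) (w : R -> R) (c : R) :
  oscillation_fun R0 w ->
  (\int[mu]_(r in `]0%R, R0[) (w r / r)%:E < +oo)%E -> 0 < c ->
  mu.-integrable `]c, R0[ (EFin \o (fun s => w s / s ^+ 2)).
Proof.
move=> osc fin c0; have iu := @u_integrable _ _ _ osc fin.
case: osc => [R00 [cw [mw [w0 wp]]]].
have sub : `]c, R0[ `<=` `]0, R0[ by apply: subset_itvr; rewrite bnd_simp ltW.
have ius : mu.-integrable `]c, R0[ (EFin \o (fun s => w s / s)) by apply: integrableS iu.

have iZ : mu.-integrable `]c, R0[ (fun x => ((c^-1)%:E * (EFin \o (fun s => (w s / s)%R)) x)%E) by apply: integrableZl.
move: iZ.
apply: le_integrable => //.
  apply/measurable_EFinP; exact: (measurable_funS _ sub (@meas_v _ _ _ cw)).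
move=> x; rewrite /= in_itv /= => /andP[cx xR].
have x0 : 0 < x by apply: lt_trans cx.
have wx : 0 <= w x by apply: ltW; apply: wp; rewrite x0 xR.
rewrite /=.
rewrite lee_fin ger0_norm; last by rewrite divr_ge0 // exprn_ge0 // ltW.
rewrite ger0_norm; last by apply: mulr_ge0; [rewrite invr_ge0 ltW | rewrite divr_ge0 // ltW].
rewrite expr2 invfM mulrA mulrC; apply: ler_wpM2r; first by rewrite divr_ge0 // ltW.
by rewrite lef_pV2 ?ltW // posrE.
Qed.

Lemma F_derive (R : realType) (R0 : R) (w : R -> R) (x : R) :
  oscillation_fun R0 w ->
  (\int[mu]_(r in `]0%R, R0[) (w r / r)%:E < +oo)%E -> 0 < x -> x < R0 ->
  {for x, continuous w} ->
  is_derive x 1 (fun r => \int[mu]_(s in `]0, r[) (w s / s)) (w x / x).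
Proof.
move=> osc fin x0 xR cwx; have iu := @u_integrable _ _ _ osc fin.
set U := (x + R0) / 2.
have xU : x < U by rewrite /U; lra.
have UR : U < R0 by rewrite /U; lra.
have iuU : mu.-integrable [set` Interval (BRight 0) (BRight U)]
    (EFin \o (fun s => w s / s)).
  apply: integrableS iu => //; apply: subset_itvl; rewrite bnd_simp //.
have cu : {for x, continuous (fun s => w s / s)}.
  apply: continuousM => //; apply: (@inv_continuous _ x); exact: lt0r_neq0.
have [d1 d2] := continuous_FTC1 xU iuU (ltac:(by rewrite lte_fin)) cu.
set Fc := (fun y =>
   \int[mu]_(t in [set` Interval (BRight 0) (BRight y)]) (w t / t)) in d1 d2.
have -> : w x / x = 'D_1 Fc x by rewrite -derive1E d2.
apply: (near_eq_is_derive _ (derivableP d1)).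
  near=> y.
  have y0 : 0 < y by near: y; exact: lt_nbhsr.
  have yR : y < R0 by near: y; exact: lt_nbhsl.
  rewrite /Fc; rewrite -Rintegral_itv_bndo_bndc //.
  apply: integrableS iu => //; apply: subset_itvl; rewrite bnd_simp ltW //.
Unshelve. all: by end_near. Qed.

Lemma G_derive (R : realType) (R0 : R) (w : R -> R) (x : R) :
  oscillation_fun R0 w ->
  (\int[mu]_(r in `]0%R, R0[) (w r / r)%:E < +oo)%E -> 0 < x -> x < R0 ->
  {for x, continuous w} ->
  is_derive x 1 (fun r => \int[mu]_(s in `]r, R0[) (w s / s ^+ 2)) (- (w x / x ^+ 2)).
Proof.
move=> osc fin x0 xR cwx.
set c := x / 2.
have c0 : 0 < c by rewrite /c; lra.
have cx : c < x by rewrite /c; lra.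
have iv := @v_integrable _ _ _ c osc fin c0.
set U := (x + R0) / 2.
have xU : x < U by rewrite /U; lra.
have UR : U < R0 by rewrite /U; lra.
have ivU : mu.-integrable [set` Interval (BRight c) (BRight U)]
    (EFin \o (fun s => w s / s ^+ 2)).
  apply: integrableS iv => //; apply: subset_itvl; rewrite bnd_simp //.
have cv : {for x, continuous (fun s => w s / s ^+ 2)}.
  apply: continuousM => //; apply: continuousV.
    by rewrite expf_neq0 // lt0r_neq0.
  exact: exprn_continuous.
have [d1 d2] := continuous_FTC1 xU ivU (ltac:(by rewrite lte_fin)) cv.
set Fc := (fun y =>
   \int[mu]_(t in [set` Interval (BRight c) (BRight y)]) (w t / t ^+ 2)) in d1 d2.
set K := \int[mu]_(t in `]c, R0[) (w t / t ^+ 2).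
have D : is_derive x 1 (fun y => K - Fc y) (- (w x / x ^+ 2)).
  have -> : - (w x / x ^+ 2) = 0 - 'D_1 Fc x by rewrite -derive1E d2 sub0r.
  apply: is_deriveB; exact: derivableP.
apply: (near_eq_is_derive _ D).
near=> y.
have cy : c < y by near: y; exact: lt_nbhsr.
have yR : y < R0 by near: y; exact: lt_nbhsl.
rewrite /K /Fc; apply: (Rintegral_itvB (a := BRight c) (b := BLeft R0)) => //.
by rewrite bnd_simp ltW.
Unshelve. all: by end_near. Qed.

Lemma F_cvg0 (R : realType) (R0 : R) (w : R -> R) :
  oscillation_fun R0 w ->
  (\int[mu]_(r in `]0%R, R0[) (w r / r)%:E < +oo)%E ->
  (fun r => \int[mu]_(s in `]0, r[) (w s / s)) @ 0^'+ --> 0.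
Proof.
move=> osc fin; have iu := @u_integrable _ _ _ osc fin.
have R00 : 0 < R0 by case: osc.
have cw : {within `[0, R0[, continuous w} by case: osc => _ [].
set b := R0 / 2.
have b0 : 0 < b by rewrite /b; lra.
have bR : b < R0 by rewrite /b; lra.
have iub : mu.-integrable `]0, b] (EFin \o (fun s => w s / s)).
  by apply: integrableS iu => //; apply: subset_itvl; rewrite bnd_simp.
have mub : measurable_fun `]0, b] (fun s => w s / s).
  have sub : `]0, b] `<=` `]0, R0[ by apply: subset_itvl; rewrite bnd_simp.
  exact: (measurable_funS _ sub (@meas_u _ _ _ cw)).
have iu0 : mu.-integrable `[0, b] (EFin \o (fun s => w s / s)).
  rewrite (@negligible_integrable _ _ _ (@lebesgue_measure R) `[0, b] [set (0:R)]) ?setDitv1l //.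
  - by apply/measurable_EFinP; apply/measurable_fun_itv_obnd_cbndP.
  - exact: lebesgue_measure_set1.
have := parameterized_integral_cvg_left b0 iu0.
move=> /(@cvg_within_filter _ _ _ _ _ _ (fun x => 0 < x)) H.
apply: cvg_trans H; apply: near_eq_cvg; near=> y.
have y0 : 0 < y by near: y; exact: nbhs_right_gt.
have yR : y < R0 by near: y; exact: nbhs_right_lt.
rewrite /parameterized_integral /=.
rewrite -Rintegral_itv_obnd_cbnd; last first.
  by apply: integrableS iu => //; apply: subset_itvl; rewrite bnd_simp.
rewrite Rintegral_itv_bndo_bndc //.
by apply: integrableS iu => //; apply: subset_itvl; rewrite bnd_simp ltW.
Unshelve. all: by end_near. Qed.
Lemma q_limit (R : realType) (q : R -> R) (C1 : \bar R) :
  (1 < C1)%E -> ((fun r => (q r)%:E) @ 0^'+ --> C1) ->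
  (\forall x \near 0^'+, 1 < q x) /\
  (q x / (q x - 1) @[x --> 0^'+] --> oscB_limit C1 + 1).
Proof.
case: C1 => [c| |] //=.
- rewrite lte_fin => c1 /fine_cvgP [_ qc].
  have qc' : q x @[x --> 0^'+] --> c by exact: qc.
  split.
    have c10 : 0 < c - 1 by rewrite subr_gt0.
    near=> x.
    have : `|c - q x| < c - 1 by near: x; exact: cvgr_dist_lt.
    rewrite ltr_norml => /andP[_ h]; lra.
  have -> : 1 / (c - 1) + 1 = c * (c - 1)^-1.
    field; by rewrite subr_eq0 gt_eqF.
  apply: cvgM => //; apply: cvgV; first by rewrite subr_eq0 gt_eqF.
  by apply: cvgB => //; exact: cvg_cst.
- move=> _ /cvgeryP qoo.
  have q1 : \forall x \near 0^'+, 1 < q x by move/cvgryPgt : qoo; apply.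
  split => //.
  have q1oo : (fun x => q x - 1) @ 0^'+ --> +oo.
    apply/cvgryPgt => A; move/cvgryPgt : qoo => /(_ (A + 1)).
    by apply: filterS => x; lra.
  have V0 : (fun x => (q x - 1)^-1) @ 0^'+ --> 0.
    apply/gtr0_cvgV0 => //; by apply: filterS q1 => x; lra.
  rewrite add0r -[X in _ --> X]addr0.
  have V1 : (fun x => 1 + (q x - 1)^-1) @ 0^'+ --> (1 + 0 : R) by apply: cvgD => //; exact: cvg_cst.
  apply: cvg_trans V1; apply: near_eq_cvg; near=> x.
  have : 1 < q x by near: x.
  move=> h; rewrite /=; field; rewrite subr_eq0 gt_eqF //.
Unshelve. all: by end_near. Qed.

Theorem lemma3p1 (R : realType) (R0 : R) (w : R -> R) (C1 : \bar R) :
  oscillation_fun R0 w ->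
  (exists2 delta : R, 0 < delta <= R0 &
     concave_on `[0, delta[ w /\
     (forall r, 0 < r < delta -> derivable w r 1)) ->
  (\int[lebesgue_measure]_(r in `]0%R, R0[) (w r / r)%:E < +oo)%E ->
  (w r / r @[r --> 0^'+] --> +oo) ->
  (1 < C1)%E ->
  ((fun r => (w r / (r * derive1 w r))%:E) @ 0^'+ --> C1) ->
  ((fun r => (oscB R0 w r)%:E) @ 0^'+ --> (oscB_limit C1)%:E) /\
  (exists2 C2 : R, 0 < C2 & \forall r \near 0^'+, oscB R0 w r <= C2).
Proof.
move=> osc [d /andP[d0 dR] [_ dw]] fin uoo C1gt qC1.
have [R00 [cw [mw [w0 wp]]]] := osc.
have [q1 qlim] := @q_limit _ _ _ C1gt qC1.
have [b0 b00 Hb0] := @near_right_itv _ _ _ q1.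
pose b := Num.min b0 d.
have b0b : 0 < b by rewrite lt_min b00 d0.
have bb0 : b <= b0 by rewrite ge_min lexx.
have bd : b <= d by rewrite ge_min lexx orbT.
pose w' := fun x => derive1 w x.
pose u := fun s => w s / s.
pose G := fun r => \int[mu]_(s in `]r, R0[) (w s / s ^+ 2).
pose F := fun r => \int[mu]_(s in `]0, r[) (w s / s).
pose H := fun r => r * G r.
pose du := fun x => w' x / x - w x / x ^+ 2.
have facts : forall x, x \in `]0, b[ ->
  [/\ 0 < x, x < R0, 0 < w x, 0 < x * w' x & x * w' x < w x].
  move=> x; rewrite in_itv /= => /andP[x0 xb].
  have xR : x < R0 by apply: (lt_le_trans xb); apply: (le_trans bd).
  have wx : 0 < w x by apply: wp; rewrite x0.
  have qx : 1 < w x / (x * derive1 w x).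
    by apply: Hb0; rewrite x0 (lt_le_trans xb).
  have Dp : 0 < x * w' x.
    rewrite /w'; case: (ltrgt0P (x * derive1 w x)) qx => // [Dn|->].
      move=> h; have : 0 < w x / - (x * derive1 w x) by rewrite divr_gt0 // oppr_gt0.
      rewrite invrN mulrN; lra.
    by rewrite invr0 mulr0 => h; lra.
  split => //.
  by move: qx; rewrite ltr_pdivlMr // mul1r.
have Dw : forall x, x \in `]0, b[ -> is_derive x 1 w (w' x).
  move=> x xb; have [x0 _ _ _ _] := facts x xb.
  rewrite /w' derive1E; apply: derivableP; apply: dw.
  by move: xb; rewrite in_itv /= x0 => /andP[_ xb]; apply: (lt_le_trans xb).
have Cw : forall x, x \in `]0, b[ -> {for x, continuous w}.
  move=> x xb; apply: differentiable_continuous; apply/derivable1_diffP.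
  by have [] := Dw x xb.
have Du : forall x, x \in `]0, b[ -> is_derive x 1 u (du x).
  move=> x xb; have [x0 _ _ _ _] := facts x xb.
  have h1 := @is_deriveV _ id x 1 1 (lt0r_neq0 x0) (is_derive_id x 1).
  have h2 := is_deriveM (Dw x xb) h1.
  have -> : u = w * (fun y => (id y)^-1) by apply/funext.
  suff -> : du x = w x *: (- x ^- 2)%:A + x^-1 *: w' x by exact: h2.
  rewrite /du /= /GRing.scale /=; field; exact: lt0r_neq0.
have DG : forall x, x \in `]0, b[ -> is_derive x 1 G (- (w x / x ^+ 2)).
  move=> x xb; have [x0 xR _ _ _] := facts x xb.
  exact: (@G_derive _ _ _ _ osc fin x0 xR (Cw x xb)).
have DF : forall x, x \in `]0, b[ -> is_derive x 1 F (u x).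
  move=> x xb; have [x0 xR _ _ _] := facts x xb.
  exact: (@F_derive _ _ _ _ osc fin x0 xR (Cw x xb)).
have DH : forall x, x \in `]0, b[ -> is_derive x 1 H (G x - u x).
  move=> x xb; have [x0 _ _ _ _] := facts x xb.
  have h2 := is_deriveM (is_derive_id x 1) (DG x xb).
  have -> : H = id * G by apply/funext.
  suff -> : G x - u x = x *: - (w x / x ^+ 2) + (G x)%:A by exact: h2.
  rewrite /u /= /GRing.scale /=; field; exact: lt0r_neq0.
have du0 : forall x, x \in `]0, b[ -> du x != 0.
  move=> x xb; have [x0 _ wx Dp Dw'] := facts x xb.
  have h : du x * x ^+ 2 = x * w' x - w x by rewrite /du; field; exact: lt0r_neq0.
  apply/eqP => h0; rewrite h0 mul0r in h; lra.
have GU : G x / u x @[x --> 0^'+] --> oscB_limit C1 + 1.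
  apply: (@lhopital_infty _ G (fun x => - (w x / x ^+ 2)) u du 0 b _ b0b DG Du du0 uoo).
  apply: cvg_trans qlim; apply: near_eq_cvg; near=> x.
  have xb : x \in `]0, b[.
    rewrite in_itv /=; apply/andP; split.
      by near: x; exact: nbhs_right_gt.
    by near: x; exact: nbhs_right_lt.
  have [x0 _ wx Dp Dw'] := facts x xb.
  rewrite /du /w'; field.
  rewrite /w' in Dp Dw'.
  apply/and4P; split; apply/eqP => h; try lra.
  by rewrite h mulr0 in Dp; lra.
have w0r : w x @[x --> 0^'+] --> 0.
  have R2 : 0 < R0 / 2 by lra.
  have sub : `[0, R0 / 2] `<=` `[0, R0[.
    by apply: subset_itvl; rewrite bnd_simp; lra.
  have := continuous_subspaceW sub cw.
  move/(continuous_within_itvP _ R2) => [_ h _].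
  by rewrite w0 in h.
have H0 : H x @[x --> 0^'+] --> 0.
  have P : (fun x => w x * (G x / u x)) @ 0^'+ --> 0 * (oscB_limit C1 + 1).
    by apply: cvgM.
  rewrite mul0r in P; apply: cvg_trans P; apply: near_eq_cvg; near=> x.
  have xb : x \in `]0, b[.
    rewrite in_itv /=; apply/andP; split.
      by near: x; exact: nbhs_right_gt.
    by near: x; exact: nbhs_right_lt.
  have [x0 _ wx _ _] := facts x xb.
  rewrite /H /u /=; field; apply/andP; split; apply/eqP => h; lra.
have F0 := @F_cvg0 _ _ _ osc fin.
have u0 : forall x, x \in `]0, b[ -> u x != 0.
  move=> x xb; have [x0 _ wx _ _] := facts x xb.
  by rewrite /u mulf_neq0 // ?invr_eq0 ?gt_eqF.
have HF : H x / F x @[x --> 0^'+] --> oscB_limit C1.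
  apply: (@lhopital_at_right _ H (fun x => G x - u x) F u 0 b (oscB_limit C1) b0b DH DF H0 F0 u0).
  have P : (fun x => G x / u x - 1) @ 0^'+ --> oscB_limit C1 + 1 - 1.
    by apply: cvgB => //; exact: cvg_cst.
  rewrite addrK in P; apply: cvg_trans P; apply: near_eq_cvg; near=> x.
  have xb : x \in `]0, b[.
    rewrite in_itv /=; apply/andP; split.
      by near: x; exact: nbhs_right_gt.
    by near: x; exact: nbhs_right_lt.
  have := u0 x xb; move=> ux.
  rewrite /=; field; exact: ux.
have HF' : oscB R0 w x @[x --> 0^'+] --> oscB_limit C1.
  by apply: cvg_trans HF; apply: near_eq_cvg; near=> x.
split.
  by apply: cvg_EFin => //; near=> x.
exists (`|oscB_limit C1| + 1); first by rewrite ltr_pwDr.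
move/cvgrPdist_le : HF' => /(_ 1 ltr01).
apply: filterS => x h.
rewrite distrC ler_norml in h; case/andP: h => _ h.
have := ler_norm (oscB_limit C1); lra.
Unshelve. all: by end_near. Qed.
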